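(* Let $(X,d^\star)$ be a $\star$-metric space and $A\subseteq X$. Then the closure of $A$ in $(X,\mathscr{T}_{d^\star})$ equals $\{x\in X: D(A,x)=0\}$.
   Context: A $t$-definer is a function $\star:[0,\infty)\times[0,\infty)\to[0,\infty)$ such that for all $a,b,c\ge 0$: $a\star b=b\star a$; $a\star(b\star c)=(a\star b)\star c$; if $a\le b$ then $a\star c\le b\star c$; $a\star 0=a$; and $\star$ is continuous in its first variable with respect to the Euclidean topology. Given a nonempty set $X$ and a $t$-definer $\star$, a $\star$-metric on $X$ is a function $d^\star:X\times X\to[0,\infty)$ such that for all $x,y,z\in X$: $d^\star(x,y)=0$ iff $x=y$; $d^\star(x,y)=d^\star(y,x)$; and $d^\star(x,y)\le d^\star(x,z)\star d^\star(z,y)$. Put $B_{d^\star}(a,r)=\{x\in X: d^\star(a,x)<r\}$ and let $\mathscr{T}_{d^\star}$ be the topology consisting of all $U\subseteq X$ such that for each $a\in U$ some $B_{d^\star}(a,r)$, $r>0$, is contained in $U$. The distance from a point to a set is $D(A,x)=D(x,A)=\inf_{y\in A}d^\star(x,y)$ if $A\ne\emptyset$, and $D(\emptyset,x)=1$. *)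

(* Defs.v *)
From HB Require Import structures.
From mathcomp Require Import all_boot all_order all_algebra.
From mathcomp Require Import all_classical all_reals.
Set Implicit Arguments. Unset Strict Implicit. Unset Printing Implicit Defensive.
Import Order.TTheory GRing.Theory Num.Theory.
Local Open Scope classical_set_scope.
Local Open Scope ring_scope.

(* A t-definer: a map [0,oo) x [0,oo) -> [0,oo), represented as a function
   R -> R -> R whose behaviour is only constrained on nonnegative arguments. *)
Definition t_definer {R : realType} (star : R -> R -> R) : Prop :=
  (forall a b, 0 <= a -> 0 <= b -> 0 <= star a b) /\
  (forall a b, 0 <= a -> 0 <= b -> star a b = star b a) /\
  (forall a b c, 0 <= a -> 0 <= b -> 0 <= c ->
      star a (star b c) = star (star a b) c) /\
  (forall a b c, 0 <= a -> 0 <= b -> 0 <= c -> a <= b -> star a c <= star b c) /\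
  (forall a, 0 <= a -> star a 0 = a) /\
  (forall b a, 0 <= b -> 0 <= a -> forall e : R, 0 < e ->
      exists2 del : R, 0 < del & forall a', 0 <= a' -> `|a' - a| < del ->
        `|star a' b - star a b| < e).

Definition star_metric {R : realType} {X : Type} (star : R -> R -> R)
    (d : X -> X -> R) : Prop :=
  (forall x y, 0 <= d x y) /\
  (forall x y, d x y = 0 <-> x = y) /\
  (forall x y, d x y = d y x) /\
  (forall x y z, d x y <= star (d x z) (d z y)).

Definition sball {R : realType} {X : Type} (d : X -> X -> R) (a : X) (r : R)
  : set X := [set x | d a x < r].

Definition sopen {R : realType} {X : Type} (d : X -> X -> R) (U : set X) : Prop :=
  forall a, U a -> exists2 r : R, 0 < r & sball d a r `<=` U.

Definition sclosed {R : realType} {X : Type} (d : X -> X -> R) (F : set X) : Prop :=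
  sopen d (~` F).

Definition sclosure {R : realType} {X : Type} (d : X -> X -> R) (A : set X)
  : set X := [set x | forall F, sclosed d F -> A `<=` F -> F x].

(* Distance from a point to a set; D(emptyset, x) = 1. *)
Definition Dist {R : realType} {X : Type} (d : X -> X -> R) (A : set X) (x : X)
  : R :=
  if pselect (A !=set0) then inf [set d x y | y in A] else 1.

(* Main.v *)
Require Import Defs.
From HB Require Import structures.
From mathcomp Require Import all_boot all_order all_algebra.
From mathcomp Require Import all_classical all_reals.
Import Order.TTheory GRing.Theory Num.Theory.
Local Open Scope classical_set_scope.
Local Open Scope ring_scope.

Lemma star_small (R : realType) (star : R -> R -> R) : t_definer star ->
  forall e : R, 0 < e -> exists2 eta : R, 0 < eta &
    forall a c, 0 <= a -> 0 <= c -> a < eta -> c < eta -> star a c < e.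
Proof.
move=> [h0 [hC [hA [hM [hZ hK]]]]] e e0.
have e2 : 0 < e / 2 by rewrite divr_gt0.
have [del del0 Hd] := hK (e / 2) 0 (ltW e2) (lexx _) _ e2.
exists (Num.min del (e / 2)); first by rewrite lt_min del0 e2.
move=> a c a0 c0; rewrite !lt_min => /andP[ad ae] /andP[cd ce].
have Hc := Hd c c0; rewrite subr0 ger0_norm // in Hc.
have {}Hc := Hc cd.
rewrite (hC 0 (e / 2)) ?lexx ?(ltW e2) // hZ ?(ltW e2) in Hc.
have Hc2 : star c (e / 2) < e.
  have := ler_norm (star c (e / 2) - e / 2).
  move=> H; have := le_lt_trans H Hc.
  by rewrite ltrBlDr -splitr.
apply: le_lt_trans (hM a (e / 2) c a0 (ltW e2) c0 (ltW ae)) _.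
rewrite hC //; exact: ltW.
all: done. Qed.

Theorem proposition4p7 (R : realType) (X : Type) (star : R -> R -> R)
  (d : X -> X -> R) (A : set X) :
  t_definer star -> star_metric star d ->
  sclosure d A = [set x | Dist d A x = 0].
Proof.
move=> ht [dge0 [d0 [dsym dtri]]].
have lbS : forall z, lbound [set d z y | y in A] 0.
  move=> z t [y Ay yt]; rewrite -yt; exact: dge0.
have Dge0 : forall z, 0 <= Dist d A z.
  move=> z; rewrite /Dist; case: (pselect (A !=set0)) => /= [An|nA]; last exact: ler01.
  case: (An) => y Ay.
  by apply: lb_le_inf; [exists (d z y); exists y|exact: lbS].
rewrite eqEsubset; split => x /=.
- move=> hx; apply: (hx [set z | Dist d A z = 0]).
  + move=> z /= hz.
    case: (pselect (A !=set0)) => [An|An]; last first.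
      exists 1 => //; move=> w _ /=; rewrite /Dist; case: (pselect (A !=set0)) => /= ? //.
      by move=> /eqP; rewrite oner_eq0.
    have dz : 0 < Dist d A z by rewrite lt_neqAle eq_sym; apply/andP; split;
      [apply/eqP|exact: Dge0].
    have [eta eta0 He] := @star_small R star ht _ dz.
    exists eta => // w /= zw Dw.
    have Dw' : inf [set d w y | y in A] = 0.
      by move: Dw; rewrite /Dist; case: (pselect (A !=set0)) => /= ?.
    have [_ [y Ay <-] yw] : exists2 t, [set d w y | y in A] t & t < eta.
      apply: inf_lt; first by case: An => y Ay; exists (d w y); exists y.
      by rewrite Dw'.
    have : Dist d A z <= d z y.
      rewrite /Dist; case: (pselect (A !=set0)) => /= ? //.
      by apply: ge_inf; [exists 0; exact: lbS|exists y].
    apply/negP; rewrite -ltNge.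
    apply: le_lt_trans (dtri z y w) _.
    by apply: He.
  + move=> y Ay /=; apply/eqP; rewrite eq_le Dge0 andbT.
    rewrite /Dist; case: (pselect (A !=set0)) => /= [An|[]]; last by exists y.
    rewrite -(proj2 (d0 y y) erefl).
    by apply: ge_inf; [exists 0; exact: lbS|exists y].
- move=> hx F hF AF; apply: contrapT => nFx.
  have [r r0 Hr] := hF x nFx.
  move: hx; rewrite /Dist; case: (pselect (A !=set0)) => /= [An|nA]; last first.
    by move/eqP; rewrite oner_eq0.
  move=> hinf.
  have [_ [y Ay <-] xy] : exists2 t, [set d x y | y in A] t & t < r.
    apply: inf_lt; first by case: An => y Ay; exists (d x y); exists y.
    by rewrite hinf.
  by apply: (Hr y xy); apply: AF.
Qed.
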